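(* Let $A$ be a commutative noetherian ring and $\operatorname{mod} A$ the category of finitely generated $A$-modules. The map $\mathcal D\mapsto\operatorname{Ass}\mathcal D=\bigcup_{M\in\mathcal D}\operatorname{Ass} M$ induces a bijection between the set of full subcategories of $\operatorname{mod} A$ closed under submodules and extensions, and the set of all subsets of $\operatorname{Spec} A$.
   Context: $\operatorname{Ass} M$ is the set of associated primes of $M$. *)

(* Defs.v *)
From HB Require Import structures.
From mathcomp Require Import all_boot all_order all_algebra.
Set Implicit Arguments. Unset Strict Implicit. Unset Printing Implicit Defensive.
Import GRing.Theory.
Local Open Scope ring_scope.

Section Defs.
Variable A : comPzRingType.

Definition is_ideal (I : A -> Prop) : Prop :=
  [/\ I 0, (forall a b, I a -> I b -> I (a + b)) & (forall r a, I a -> I (r * a))].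

Definition prime_ideal (p : A -> Prop) : Prop :=
  [/\ is_ideal p, ~ p 1 & (forall a b, p (a * b) -> p a \/ p b)].

Definition noetherian_ring : Prop :=
  forall I : nat -> (A -> Prop),
    (forall n, is_ideal (I n)) ->
    (forall n a, I n a -> I n.+1 a) ->
    exists N, forall n a, (N <= n)%N -> I n a -> I N a.

Definition fin_gen (M : lmodType A) : Prop :=
  exists s : seq M, forall x : M,
    exists c : 'I_(size s) -> A, x = \sum_(i < size s) c i *: s`_i.

Definition Ass (M : lmodType A) (p : A -> Prop) : Prop :=
  prime_ideal p /\ exists x : M, forall a, p a <-> a *: x = 0.

Definition subcat := forall M : lmodType A, Prop.

Definition AssD (D : subcat) (p : A -> Prop) : Prop :=
  exists M : lmodType A, D M /\ Ass M p.

(* Nonempty full subcategory of mod A (objects finitely generated),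
   closed under submodules (hence under isomorphisms: any module admitting an
   injective A-linear map into a member of D is in D) and under extensions. *)
Definition sub_ext_closed (D : subcat) : Prop :=
  [/\ (exists M, D M),
      (forall M, D M -> fin_gen M),
      (forall (N M : lmodType A) (f : {linear N -> M}),
          injective f -> D M -> D N) &
      (forall (L M N : lmodType A) (f : {linear L -> M}) (g : {linear M -> N}),
          injective f -> (forall z, exists y, g y = z) ->
          (forall y, g y = 0 <-> exists x, f x = y) ->
          D L -> D N -> D M)].

End Defs.

(* Main.v *)
Require Import Defs.
From HB Require Import structures.
From mathcomp Require Import all_boot all_order all_algebra.
From mathcomp Require Import boolp.
From Stdlib Require Import Classical.
Set Implicit Arguments. Unset Strict Implicit. Unset Printing Implicit Defensive.
Import GRing.Theory.
Local Open Scope ring_scope.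

Definition is_submod (A : comPzRingType) (M : lmodType A) (P : M -> Prop) :=
  [/\ P 0, (forall x y, P x -> P y -> P (x + y)) & (forall a x, P x -> P (a *: x))].

Section Sub.
Variables (A : comPzRingType) (M : lmodType A) (P : M -> Prop).
Hypothesis hP : is_submod P.
Definition subm of is_submod P := {x : M | asbool (P x)}.
Local Notation S := (subm hP).
HB.instance Definition _ := Choice.on S.
Lemma subP (x : S) : P (sval x).
Proof. by case: x => x h; apply/asboolP. Qed.
Definition mkS x (h : P x) : S := exist _ x (introT (asboolP _) h).
Lemma hP0 : P 0. Proof. by case: hP. Qed.
Lemma hPD x y : P x -> P y -> P (x + y). Proof. by case: hP => _ h _; apply: h. Qed.
Lemma hPZ a x : P x -> P (a *: x). Proof. by case: hP => _ _ h; apply: h. Qed.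
Lemma hPN x : P x -> P (- x). Proof. by move=> h; have := hPZ (-1) h; rewrite scaleN1r. Qed.
Definition s0 : S := mkS hP0.
Definition sadd (x y : S) : S := mkS (hPD (subP x) (subP y)).
Definition sopp (x : S) : S := mkS (hPN (subP x)).
Definition sscale a (x : S) : S := mkS (hPZ a (subP x)).
Lemma sval_inj : injective (@sval M _ : S -> M).
Proof. move=> [x hx] [y hy] /= e; subst y; congr exist; exact: bool_irrelevance. Qed.
Lemma saddA : associative sadd. Proof. by move=> x y z; apply: sval_inj; rewrite /= addrA. Qed.
Lemma saddC : commutative sadd. Proof. by move=> x y; apply: sval_inj; rewrite /= addrC. Qed.
Lemma sadd0 : left_id s0 sadd. Proof. by move=> x; apply: sval_inj; rewrite /= add0r. Qed.
Lemma saddN : left_inverse s0 sopp sadd. Proof. by move=> x; apply: sval_inj; rewrite /= addNr. Qed.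
HB.instance Definition _ := GRing.isZmodule.Build S saddA saddC sadd0 saddN.
Lemma sscaleA a b v : sscale a (sscale b v) = sscale (a * b) v.
Proof. by apply: sval_inj; rewrite /= scalerA. Qed.
Lemma sscale1 : left_id 1 sscale. Proof. by move=> x; apply: sval_inj; rewrite /= scale1r. Qed.
Lemma sscaleDr : right_distributive sscale +%R.
Proof. by move=> a x y; apply: sval_inj; rewrite /= scalerDr. Qed.
Lemma sscaleDl v : {morph sscale^~ v: a b / a + b}.
Proof. by move=> a b; apply: sval_inj; rewrite /= scalerDl. Qed.
HB.instance Definition _ := GRing.Zmodule_isLmodule.Build A S sscaleA sscale1 sscaleDr sscaleDl.
Lemma svalD (x y : S) : sval (x + y) = sval x + sval y. Proof. by []. Qed.
Lemma svalZ a (x : S) : sval (a *: x) = a *: sval x. Proof. by []. Qed.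
Lemma sval0 : sval (0 : S) = 0. Proof. by []. Qed.
Lemma sval_lin : linear (@sval M _ : S -> M). Proof. by []. Qed.
End Sub.

Definition mklin (A : comPzRingType) (U V : lmodType A) (f : U -> V) (hf : linear f) : {linear U -> V} :=
  HB.pack f (GRing.isLinear.Build A U V *:%R f hf).

Definition ACC (T : Type) (C : (T -> Prop) -> Prop) :=
  forall X : nat -> T -> Prop, (forall n, C (X n)) -> (forall n x, X n x -> X n.+1 x) ->
    exists N, forall n x, (N <= n)%N -> X n x -> X N x.

Lemma chain_mono (T : Type) (X : nat -> T -> Prop) :
  (forall n x, X n x -> X n.+1 x) -> forall m n x, (m <= n)%N -> X m x -> X n x.
Proof.
move=> h m n x; elim: n => [|n IH]; first by rewrite leqn0 => /eqP ->.
rewrite leq_eqVlt => /orP [/eqP -> //| lt hx]; apply: h; exact: IH.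
Qed.

Lemma acc_max (T : Type) (C : (T -> Prop) -> Prop) : ACC C ->
  forall F : (T -> Prop) -> Prop, (forall X, F X -> C X) -> (exists X, F X) ->
  exists X, F X /\ forall Y, F Y -> (forall x, X x -> Y x) -> forall x, Y x -> X x.
Proof.
move=> hacc F FC [X0 FX0]; apply: NNPP => hn.
have step : forall Z : {X | F X}, {Y : {X | F X} | (forall x, sval Z x -> sval Y x) /\ ~ (forall x, sval Y x -> sval Z x)}.
  move=> [Z FZ]; apply: constructive_indefinite_description.
  apply: NNPP => h2; apply: hn; exists Z; split => // Y FY ZY.
  apply: NNPP => h3; apply: h2; by exists (exist _ Y FY).
pose sq n := iter n (fun Z => sval (step Z)) (exist _ X0 FX0).
have [N HN] : exists N, forall n x, (N <= n)%N -> sval (sq n) x -> sval (sq N) x.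
  apply: hacc => [n|n x]; first exact: FC (svalP (sq n)).
  by rewrite /sq iterS; case: (svalP (step (sq n))) => h _; apply: h.
have := svalP (step (sq N)); case=> _; apply => x hx.
exact: (HN N.+1 x (leqnSn N) hx).
Qed.

Section Span.
Variables (A : comPzRingType) (M : lmodType A).
Fixpoint span (s : seq M) : M -> Prop :=
  match s with
  | [::] => fun x => x = 0
  | a :: s' => fun x => exists c y, span s' y /\ x = c *: a + y
  end.

Lemma span_submod s : is_submod (span s).
Proof.
elim: s => [|a s [h0 hD hZ]] /=.
  by split=> [//|x y -> ->|c x ->]; rewrite ?addr0 ?scaler0.
split.
- by exists 0, 0; rewrite scale0r addr0.
- move=> x y [c1 [y1 [h1 ->]]] [c2 [y2 [h2 ->]]]; exists (c1 + c2), (y1 + y2); split; first exact: hD.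
  by rewrite scalerDl -!addrA; congr (_ + _); rewrite addrCA.
- move=> b x [c [y [h ->]]]; exists (b * c), (b *: y); split; first exact: hZ.
  by rewrite scalerDr scalerA.
Qed.

Lemma span_head a s : span (a :: s) a.
Proof. exists 1, 0; split; last by rewrite scale1r addr0. by case: (span_submod s). Qed.

Lemma span_tail a s x : span s x -> span (a :: s) x.
Proof. by move=> h; exists 0, x; rewrite scale0r add0r. Qed.

Lemma span_min s (P : M -> Prop) : is_submod P -> (forall y, y \in s -> P y) ->
  forall x, span s x -> P x.
Proof.
move=> hP; elim: s => [|a s IH] hs x /=; first by move->; apply: hP0 hP.
move=> [c [y [h ->]]]; apply: (hPD hP); first by apply: (hPZ hP); apply: hs; rewrite inE eqxx.
by apply: IH => // z hz; apply: hs; rewrite inE hz orbT.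
Qed.

Lemma span_fin s x : span s x <-> exists c : 'I_(size s) -> A, x = \sum_(i < size s) c i *: s`_i.
Proof.
elim: s x => [|a s IH] x /=.
  by split=> [->|[c ->]]; [exists (fun _ => 0); rewrite big_ord0 | rewrite big_ord0].
split.
  move=> [c [y [/IH [c' ->] ->]]].
  exists (fun i => if unlift ord0 i is Some j then c' j else c).
  by rewrite big_ord_recl unlift_none /=; congr (_ + _); apply: eq_bigr => i _; rewrite liftK.
move=> [c ->]; rewrite big_ord_recl; exists (c ord0), (\sum_(i < size s) c (lift ord0 i) *: s`_i).
split=> //; apply/IH; by exists (fun i => c (lift ord0 i)).
Qed.
End Span.

Section SpanMap.
Variables (A : comPzRingType) (U V : lmodType A) (f : {linear U -> V}).
Lemma span_map l x : span l x -> span (map f l) (f x).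
Proof.
elim: l x => [|a l IH] x /=; first by move->; rewrite linear0.
by move=> [c [y [h ->]]]; exists c, (f y); split; [exact: IH | rewrite linearD linearZ].
Qed.
Lemma span_map_inv l y : span (map f l) y -> exists x, span l x /\ y = f x.
Proof.
elim: l y => [|a l IH] y /=; first by move->; exists 0; rewrite linear0.
move=> [c [z [/IH [x [hx ->]] ->]]]; exists (c *: a + x); split; first by exists c, x.
by rewrite linearD linearZ.
Qed.
End SpanMap.

Section Acc.
Variables (A : comPzRingType) (M : lmodType A).
Hypothesis hA : noetherian_ring A.

Lemma span_acc (s : seq M) : forall X : nat -> M -> Prop, (forall n, is_submod (X n)) ->
  (forall n x, X n x -> X n.+1 x) -> (forall n x, X n x -> span s x) ->
  exists N, forall n x, (N <= n)%N -> X n x -> X N x.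
Proof.
elim: s => [|a s IH] X hX hm hs.
  exists 0%N => n x _ /hs /= ->; exact: hP0 (hX 0%N).
pose I n c := exists m, X n m /\ span s (m - c *: a).
have hI : forall n, is_ideal (I n).
  move=> n; split.
  - by exists 0; split; [exact: hP0 (hX n)| rewrite scale0r subr0; apply: hP0 (span_submod s)].
  - move=> c1 c2 [m1 [h1 s1]] [m2 [h2 s2]]; exists (m1 + m2); split; first exact: (hPD (hX n)).
    have -> : m1 + m2 - (c1 + c2) *: a = (m1 - c1 *: a) + (m2 - c2 *: a).
      by rewrite scalerDl opprD addrACA.
    exact: (hPD (span_submod s)).
  - move=> r c [m [h1 s1]]; exists (r *: m); split; first exact: (hPZ (hX n)).
    by rewrite -scalerA -scalerBr; apply: (hPZ (span_submod s)).
have [N1 HN1] := hA hI (fun n c => fun '(ex_intro m (conj h1 s1)) => ex_intro _ m (conj (hm n m h1) s1)).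
pose Y n x := X n x /\ span s x.
have [N2 HN2] : exists N, forall n x, (N <= n)%N -> Y n x -> Y N x.
  apply: IH.
  - move=> n; split; first by split; [exact: hP0 (hX n)| exact: hP0 (span_submod s)].
    + by move=> x y [h1 h2] [h3 h4]; split; [exact: (hPD (hX n))| exact: (hPD (span_submod s))].
    + by move=> c x [h1 h2]; split; [exact: (hPZ (hX n))| exact: (hPZ (span_submod s))].
  - by move=> n x [h1 h2]; split=> //; apply: hm.
  - by move=> n x [].
exists (maxn N1 N2) => n x hn hx.
have hn1 : (N1 <= n)%N by apply: leq_trans hn; apply: leq_maxl.
have hn2 : (N2 <= n)%N by apply: leq_trans hn; apply: leq_maxr.
have := hs n x hx; move=> [c [y [hy ex]]].
have hIn : I n c by exists x; split=> //; rewrite ex addrAC subrr add0r.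
have [m' [hm' sm']] : I (maxn N1 N2) c.
  have [m'' [h1 h2]] := HN1 n c hn1 hIn.
  by exists m''; split=> //; apply: (chain_mono hm) h1; apply: leq_maxl.
have hm'n : X n m' by apply: (chain_mono hm) hm'.
have hY : Y n (x - m').
  split; first by apply: (hPD (hX n)) => //; apply: (hPN (hX n)).
  have -> : x - m' = y - (m' - c *: a) by rewrite ex opprB -addrA addrCA.
  by apply: (hPD (span_submod s)) => //; apply: (hPN (span_submod s)).
have [hY1 _] := HN2 n _ hn2 hY.
have hY2 : X (maxn N1 N2) (x - m') by apply: (chain_mono hm) hY1; apply: leq_maxr.
by have := hPD (hX _) hY2 hm'; rewrite subrK.
Qed.

Lemma acc_fg (s : seq M) : (forall x, span s x) -> ACC (@is_submod A M).
Proof.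
move=> hs X hX hm; apply: span_acc hX hm _ => n x _; exact: hs.
Qed.
End Acc.

Section Helpers.
Variable (A : comPzRingType).
Implicit Types (D : subcat A).

Lemma AssD_ext D (q q' : A -> Prop) : (forall a, q a <-> q' a) -> AssD D q -> AssD D q'.
Proof.
move=> h; have -> : q' = q; last by [].
by apply: funext => a; apply: propext; split => /h.
Qed.

Lemma D_inj D (N M : lmodType A) (f : N -> M) : linear f -> injective f -> sub_ext_closed D ->
  D M -> D N.
Proof. by move=> lf inj [_ _ h _]; apply: (h N M (mklin lf)). Qed.

Lemma D_ext D (L M N : lmodType A) (f : L -> M) (g : M -> N) : linear f -> linear g ->
  injective f -> (forall z, exists y, g y = z) -> (forall y, g y = 0 <-> exists x, f x = y) ->
  sub_ext_closed D -> D L -> D N -> D M.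
Proof. by move=> lf lg inj sur ex [_ _ _ h]; apply: (h L M N (mklin lf) (mklin lg)). Qed.

Lemma ideal0 (I : A -> Prop) : is_ideal I -> I 0. Proof. by case. Qed.
Lemma idealD (I : A -> Prop) : is_ideal I -> forall a b, I a -> I b -> I (a + b).
Proof. by case=> _ h _; apply: h. Qed.
Lemma idealM (I : A -> Prop) : is_ideal I -> forall r a, I a -> I (r * a).
Proof. by case=> _ _ h; apply: h. Qed.
Lemma idealMr (I : A -> Prop) : is_ideal I -> forall r a, I a -> I (a * r).
Proof. by move=> hI r a h; rewrite mulrC; apply: idealM. Qed.
Lemma idealN (I : A -> Prop) : is_ideal I -> forall a, I a -> I (- a).
Proof. by move=> hI a h; rewrite -mulN1r; apply: idealM. Qed.
Lemma idealB (I : A -> Prop) : is_ideal I -> forall a b, I a -> I b -> I (a - b).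
Proof. by move=> hI a b ha hb; apply: idealD => //; apply: idealN. Qed.

Lemma ann_ideal (M : lmodType A) (K : M -> Prop) : is_submod K ->
  forall m, is_ideal (fun a => K (a *: m)).
Proof.
move=> hK m; split.
- by rewrite scale0r; apply: hP0 hK.
- by move=> a b ha hb; rewrite scalerDl; apply: (hPD hK).
- by move=> r a h; rewrite -scalerA; apply: (hPZ hK).
Qed.

Lemma zero_submod (M : lmodType A) : is_submod (fun x : M => x = 0).
Proof. by split=> [//|x y -> ->|a x ->]; rewrite ?addr0 ?scaler0. Qed.
End Helpers.

Section Key.
Variables (A : comPzRingType) (hA : noetherian_ring A) (D : subcat A).
Hypothesis hD : sub_ext_closed D.
Variables (M : lmodType A) (s : seq M).
Hypothesis hs : forall x : M, span s x.
Hypothesis hass : forall q, Ass M q -> AssD D q.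

Definition goodK (K : M -> Prop) :=
  exists hK : is_submod K, D (subm hK) /\
    (forall q m, prime_ideal q -> (forall a, q a <-> K (a *: m)) -> AssD D q).

Lemma good0 : goodK (fun x => x = 0).
Proof.
exists (@zero_submod A M); split.
  case: hD => [[M2 DM2] _ _ _].
  apply: (D_inj (f := fun _ : subm (@zero_submod A M) => (0 : M2))) => //.
  - by move=> a u v; rewrite scaler0 addr0.
  - by move=> u v _; apply: sval_inj; rewrite (subP u) (subP v).
by move=> q m hq hm; apply: hass; split=> //; exists m.
Qed.

Lemma key : D M.
Proof.
have hacc := acc_fg hA hs.
have [K [[hK [DK AK]] Kmax]] := acc_max hacc (F := goodK)
   (fun X '(ex_intro h _) => h) (ex_intro _ _ good0).
case: (classic (forall m, K m)) => [hall|].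
  apply: (D_inj (f := fun x => mkS hK (hall x))) DK => //.
  - by move=> a u v; apply: sval_inj.
  - by move=> u v /(congr1 sval).
move=> /not_all_ex_not [m0 hm0].
pose G (J : A -> Prop) := is_ideal J /\ exists m, ~ K m /\ forall a, J a <-> K (a *: m).
have hAi : ACC (@is_ideal A) := hA.
have [p [[pid [x1 [hx1 hp]]] pmax0]] := acc_max hAi (F := G) (fun X h => h.1)
  (ex_intro _ _ (conj (ann_ideal hK m0) (ex_intro _ m0 (conj hm0 (fun a => iff_refl _))))).
have pmax : forall m, ~ K m -> (forall a, p a -> K (a *: m)) -> forall a, K (a *: m) -> p a.
  move=> m hm hpm; apply: pmax0 => //; split; first exact: ann_ideal.
  by exists m; split.
have pprime : prime_ideal p.
  split=> //.
    by move/hp; rewrite scale1r.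
  move=> a b hab; case: (classic (p a)) => [|hna]; first by left.
  right; have hnam : ~ K (a *: x1) by move/hp.
  apply: (pmax _ hnam) => [c /hp hc|]; first by rewrite scalerA mulrC -scalerA; apply: (hPZ hK).
  by rewrite scalerA mulrC; apply/hp.
have p1 : ~ p 1 by case: pprime.
have pmul : forall a b, ~ p a -> ~ p b -> ~ p (a * b).
  by move=> a b ha hb; case: pprime => _ _ h /h [].
have [N0 [DN0 [_ [y0 hy0]]]] := AK p x1 pprime hp.
pose Lmem (t : A) (m : M) := (forall a, p a -> K (a *: m)) /\ exists c, K (t *: m - c *: x1).
have Lsub : forall t, is_submod (Lmem t).
  move=> t; split.
  - split; first by move=> a _; rewrite scaler0; apply: hP0 hK.
    by exists 0; rewrite scaler0 scale0r subr0; apply: hP0 hK.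
  - move=> x y [hx [c1 h1]] [hy [c2 h2]]; split.
      by move=> a ha; rewrite scalerDr; apply: (hPD hK); [apply: hx| apply: hy].
    exists (c1 + c2); have -> : t *: (x + y) - (c1 + c2) *: x1 = (t *: x - c1 *: x1) + (t *: y - c2 *: x1).
      by rewrite scalerDr scalerDl opprD addrACA.
    exact: (hPD hK).
  - move=> b x [hx [c h]]; split.
      by move=> a ha; rewrite scalerA mulrC -scalerA; apply: (hPZ hK); apply: hx.
    exists (b * c); rewrite scalerA mulrC -scalerA -scalerA -scalerBr.
    exact: (hPZ hK).
pose H (J : M -> Prop) := is_submod J /\ exists t, ~ p t /\ forall m, J m <-> Lmem t m.
have [L [[hL [t0 [ht0 hLe]]] Lmax0]] := acc_max hacc (F := H) (fun X h => h.1)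
  (ex_intro _ _ (conj (Lsub 1) (ex_intro _ 1 (conj p1 (fun m => iff_refl _))))).
have L1 : forall t, ~ p t -> forall m, Lmem (t0 * t) m -> L m.
  move=> t ht m hm; apply: (Lmax0 (Lmem (t0 * t))) => //.
    by split; [exact: Lsub| exists (t0 * t); split=> //; apply: pmul].
  move=> y /hLe [hy1 [c hc]]; split=> //; exists (t * c).
  rewrite [t0 * t]mulrC -!scalerA -scalerBr.
  exact: (hPZ hK).
have KL : forall m, K m -> L m.
  move=> m hm; apply/hLe; split; first by move=> a _; apply: (hPZ hK).
  by exists 0; rewrite scale0r subr0; apply: (hPZ hK).
have Lx1 : L x1.
  apply/hLe; split; first by move=> a /hp.
  by exists t0; rewrite subrr; apply: hP0 hK.
have L4 : forall m, (forall a, p a -> K (a *: m)) -> forall c, ~ p c -> K (c *: m) -> K m.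
  move=> m hpm c hc hcm; apply: NNPP => hm; apply: hc; exact: (pmax m hm hpm).
have L5 : forall m, (forall a, p a -> K (a *: m)) -> forall t, ~ p t -> L (t *: m) -> L m.
  move=> m hpm t ht /hLe [_ [d hd]]; apply: (L1 t ht); split=> //.
  by exists d; rewrite -scalerA.
have goodL : goodK L.
  exists hL; split.
  +
    have cfP : forall y : subm hL, {c | K (t0 *: sval y - c *: x1)}.
      move=> y; apply: constructive_indefinite_description.
      by have [_ h] := (hLe _).1 (subP y).
    pose cf y := sval (cfP y).
    pose gf (y : subm hL) := cf y *: y0.
    have gfE : forall y c, K (t0 *: sval y - c *: x1) -> gf y = c *: y0.
      move=> y c hc; have hcf := svalP (cfP y).
      have : K ((c - cf y) *: x1).
        have -> : (c - cf y) *: x1 = (t0 *: sval y - cf y *: x1) - (t0 *: sval y - c *: x1).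
          by rewrite scalerBl opprB [in RHS]addrC [in RHS]addrA subrK.
        by apply: (hPD hK) => //; apply: (hPN hK).
      move/hp/hy0; rewrite scalerBl => /eqP; rewrite subr_eq0 => /eqP.
      by rewrite /gf => ->.
    have gflin : linear gf.
      move=> a u v.
      have hK' : K (t0 *: sval (a *: u + v) - (a * cf u + cf v) *: x1).
        have -> : t0 *: sval (a *: u + v) - (a * cf u + cf v) *: x1 =
            a *: (t0 *: sval u - cf u *: x1) + (t0 *: sval v - cf v *: x1).
          rewrite /= scalerDr scalerDl opprD addrACA; congr (_ + _).
          by rewrite scalerBr !scalerA mulrC.
        by apply: (hPD hK); [apply: (hPZ hK); exact: svalP (cfP u)| exact: svalP (cfP v)].
      by rewrite (gfE _ _ hK') scalerDl -scalerA.
    have gf0 : gf 0 = 0 := linear0 (mklin gflin).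
    pose Im (z : N0) := exists y, z = gf y.
    have hIm : is_submod Im.
      split.
      - by exists 0; rewrite gf0.
      - by move=> x y [u ->] [v ->]; exists (u + v); have := gflin 1 u v; rewrite !scale1r.
      - move=> a x [u ->]; exists (a *: u); have := gflin a u 0.
        by rewrite !addr0 gf0 addr0.
    pose g (y : subm hL) : subm hIm := mkS hIm (ex_intro _ y erefl).
    pose f (x : subm hK) : subm hL := mkS hL (KL _ (subP x)).
    apply: (@D_ext _ D _ _ _ f g) => //.
    - by move=> a u v; apply: sval_inj.
    - by move=> a u v; apply: sval_inj; rewrite /= gflin.
    - by move=> u v /(congr1 sval) /= /sval_inj.
    - by move=> z; have [y hy] := subP z; exists y; apply: sval_inj.
    - move=> y; split.
        move=> /(congr1 sval) /= hg0.
        have hcf := svalP (cfP y).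
        have : p (cf y) by apply/hy0.
        move/hp => hc; have Ky : K (t0 *: sval y).
          by have := hPD hK hcf hc; rewrite subrK.
        have [hpy _] := (hLe _).1 (subP y).
        have Ky' := L4 _ hpy _ ht0 Ky.
        exists (mkS hK Ky'); exact: sval_inj.
      move=> [x <-]; apply: sval_inj => /=; rewrite (gfE _ 0) ?scale0r //.
      by rewrite ?scale0r ?subr0; apply: (hPZ hK); exact: (subP x).
    - apply: (D_inj (f := @sval _ _ : subm hIm -> N0)) => //; exact: sval_inj.
  + (* associated primes of M/L *)
    move=> q m qprime hq.
    have qid : is_ideal q by case: qprime.
    case: (classic (exists a, p a /\ ~ q a)) => [[a [pa nqa]]|hpq].
      apply: (AK q (a *: m) qprime) => b; split.
        move=> /hq /hLe [h _]; rewrite scalerA mulrC -scalerA; exact: h.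
      move=> hb; have qba : q (b * a) by apply/hq; rewrite -scalerA; apply: KL.
      by case: qprime => _ _ /(_ _ _ qba) [].
    have pq : forall a, p a -> q a.
      by move=> a pa; apply: NNPP => nqa; apply: hpq; exists a.
    case: (classic (exists c, q c /\ ~ p c)) => [[c [qc npc]]|hqp].
      exfalso; case: (classic (forall b, p b -> K (b *: m))) => [hpm|].
        have : L m by apply: (L5 _ hpm c npc); apply/hq.
        by move=> Lm; case: qprime => _ q1 _; apply: q1; apply/hq; rewrite scale1r.
      move=> hnall; have [b hb] := not_all_ex_not _ _ hnall; have [pb nKbm] := imply_to_and _ _ hb.
      have Lbm : L (b *: m) by apply/hq; apply: pq.
      have [hpbm _] := (hLe _).1 Lbm.
      have Lcm : L (c *: m) by apply/hq.
      have [hpcm _] := (hLe _).1 Lcm.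
      apply: nKbm; apply: (L4 _ hpbm c npc).
      by rewrite scalerA mulrC -scalerA; apply: hpcm.
    apply: (AssD_ext (q := p)); last exact: AK pprime hp.
    move=> a; split; first exact: pq.
    by move=> qa; apply: NNPP => npa; apply: hqp; exists a.
by have := Kmax L goodL KL x1 Lx1.
Qed.
End Key.

Section FG.
Variables (A : comPzRingType).

Lemma fg_span (M : lmodType A) : fin_gen M <-> exists s : seq M, forall x, span s x.
Proof.
split=> [[s hs]|[s hs]]; exists s => x; first by apply/span_fin.
by apply/span_fin.
Qed.

Lemma span_cat (M : lmodType A) (s t : seq M) x y : span s x -> span t y -> span (s ++ t) (x + y).
Proof.
elim: s x => [|a s IH] x /=; first by move=> -> h; rewrite add0r.
move=> [c [x' [hx' ->]]] hy; exists c, (x' + y); split; first exact: IH.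
by rewrite addrA.
Qed.

Lemma lift_seq (M N : lmodType A) (g : M -> N) : (forall z, exists y, g y = z) ->
  forall l : seq N, exists l' : seq M, map g l' = l.
Proof.
move=> sur; elim=> [|z l [l' hl']]; first by exists [::].
by have [y hy] := sur z; exists (y :: l'); rewrite /= hy hl'.
Qed.

Lemma fg_sub (hA : noetherian_ring A) (N M : lmodType A) (f : {linear N -> M}) :
  injective f -> fin_gen M -> fin_gen N.
Proof.
move=> inj /fg_span [s hs]; have hacc := acc_fg hA hs.
pose F (J : M -> Prop) := is_submod J /\ exists l : seq N, forall y, J y <-> span (map f l) y.
have [J [[hJ [l0 hl0]] Jmax]] := acc_max hacc (F := F) (fun X h => h.1)
  (ex_intro _ _ (conj (span_submod (map f [::])) (ex_intro _ [::] (fun y => iff_refl _)))).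
apply/fg_span; exists l0 => x.
have hfx : span (map f l0) (f x).
  apply: NNPP => hn; apply: hn; apply/hl0.
  apply: (Jmax (span (map f (x :: l0)))).
  - by split; [exact: span_submod| exists (x :: l0)].
  - by move=> y /hl0 hy; apply: span_tail.
  - exact: span_head.
have [x' [hx' e]] := span_map_inv hfx.
by rewrite (inj _ _ e).
Qed.

Lemma fg_ext (L M N : lmodType A) (f : {linear L -> M}) (g : {linear M -> N}) :
  (forall z, exists y, g y = z) -> (forall y, g y = 0 <-> exists x, f x = y) ->
  fin_gen L -> fin_gen N -> fin_gen M.
Proof.
move=> sur ex /fg_span [sL hsL] /fg_span [sN hsN].
have [l' hl'] := lift_seq sur sN.
apply/fg_span; exists (map f sL ++ l') => m.
have := hsN (g m); rewrite -hl' => /span_map_inv [m' [hm' e]].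
have : g (m - m') = 0 by rewrite linearB e subrr.
move=> /ex [x hx].
have -> : m = f x + m' by rewrite hx subrK.
by apply: span_cat => //; apply: span_map.
Qed.

Lemma Ass_inj (N M : lmodType A) (f : {linear N -> M}) : injective f ->
  forall q, Ass N q -> Ass M q.
Proof.
move=> inj q [hq [x hx]]; split=> //; exists (f x) => a; rewrite hx -linearZ.
split=> [->|]; first by rewrite linear0.
by rewrite -(linear0 f) => /inj.
Qed.

Lemma Ass_ext (L M N : lmodType A) (f : {linear L -> M}) (g : {linear M -> N}) :
  injective f -> (forall y, g y = 0 <-> exists x, f x = y) ->
  forall q, Ass M q -> Ass L q \/ Ass N q.
Proof.
move=> inj ex q [qp [m hm]].
have qid : is_ideal q by case: qp.
case: (classic (forall a, q a <-> a *: g m = 0)) => [h|h]; first by right; split=> //; exists (g m).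
have [a ha] : exists a, ~ q a /\ a *: g m = 0.
  apply: NNPP => hn; apply: h => a; split.
    by move=> /hm e; rewrite -linearZ e linear0.
  move=> e; apply: NNPP => nqa; apply: hn; by exists a.
case: ha => nqa e.
have [x hx] : exists x, f x = a *: m by apply/ex; rewrite linearZ.
left; split=> //; exists x => b.
have -> : (b *: x = 0) <-> (b *: (a *: m) = 0).
  rewrite -hx -linearZ; split=> [->|]; first by rewrite linear0.
  by rewrite -(linear0 f) => /inj.
rewrite scalerA -hm; split; first by move=> qb; exact: idealMr qid _ _ qb.

by case: qp => _ _ H /H [].
Qed.
End FG.

Section Quot.
Variables (A : comPzRingType) (p : A -> Prop).
Hypothesis hp : is_ideal p.

Definition qrel (a : A) : pred A := fun b => asbool (p (b - a)).
Lemma qrel_ex a : exists b, qrel a b.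
Proof. by exists a; apply/asboolP; rewrite subrr; apply: ideal0. Qed.
Definition rep a := xchoose (qrel_ex a).
Lemma rep_rel a : p (rep a - a).
Proof. exact/asboolP/(xchooseP (qrel_ex a)). Qed.
Lemma rep_eq a b : p (a - b) -> rep a = rep b.
Proof.
move=> hab; apply: eq_xchoose => c; apply/idP/idP => /asboolP h; apply/asboolP.
  have -> : c - b = (c - a) + (a - b) by rewrite addrA subrK.
  exact: idealD.
have -> : c - a = (c - b) - (a - b) by rewrite opprB addrA subrK.
exact: idealB.
Qed.

Definition quo of is_ideal p := {a : A | rep a == a}.
Local Notation Q := (quo hp).
HB.instance Definition _ := Choice.on Q.
Lemma qval_inj : injective (@sval A _ : Q -> A).
Proof. move=> [x hx] [y hy] /= e; subst y; congr exist; exact: bool_irrelevance. Qed.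
Lemma rep_idem a : rep (rep a) == rep a.
Proof. by apply/eqP; apply: rep_eq; apply: rep_rel. Qed.
Definition qpi a : Q := exist _ (rep a) (rep_idem a).
Lemma piE a b : qpi a = qpi b <-> p (a - b).
Proof.
split.
  move=> /(congr1 sval) /= e.
  have -> : a - b = (rep b - b) - (rep a - a) by rewrite e opprB [in RHS]addrC [in RHS]addrA subrK.
  by apply: (idealB hp); apply: rep_rel.
by move=> h; apply: qval_inj => /=; apply: rep_eq.
Qed.
Lemma piS (x : Q) : exists a, x = qpi a.
Proof. by exists (sval x); apply: qval_inj => /=; case: x => x /= /eqP. Qed.

Definition q0 : Q := qpi 0.
Definition qadd (x y : Q) : Q := qpi (sval x + sval y).
Definition qopp (x : Q) : Q := qpi (- sval x).
Definition qscale c (x : Q) : Q := qpi (c * sval x).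
Lemma addpi a b : qadd (qpi a) (qpi b) = qpi (a + b).
Proof. by apply/piE => /=; rewrite opprD addrACA; apply: (idealD hp); apply: rep_rel. Qed.
Lemma opppi a : qopp (qpi a) = qpi (- a).
Proof. by apply/piE => /=; rewrite -opprD; apply: (idealN hp); apply: rep_rel. Qed.
Lemma scalepi c a : qscale c (qpi a) = qpi (c * a).
Proof. by apply/piE => /=; rewrite -mulrBr; apply: (idealM hp); apply: rep_rel. Qed.

Lemma qaddA : associative qadd.
Proof.
move=> x y z; case: (piS x) => a ->; case: (piS y) => b ->; case: (piS z) => c ->.
by rewrite !addpi addrA.
Qed.
Lemma qaddC : commutative qadd.
Proof. by move=> x y; case: (piS x) => a ->; case: (piS y) => b ->; rewrite !addpi addrC. Qed.
Lemma qadd0 : left_id q0 qadd.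
Proof. by move=> x; case: (piS x) => a ->; rewrite /q0 addpi add0r. Qed.
Lemma qaddN : left_inverse q0 qopp qadd.
Proof. by move=> x; case: (piS x) => a ->; rewrite opppi addpi addNr. Qed.
HB.instance Definition _ := GRing.isZmodule.Build Q qaddA qaddC qadd0 qaddN.
Lemma qaddE (x y : Q) : x + y = qadd x y. Proof. by []. Qed.
Lemma qscaleA a b v : qscale a (qscale b v) = qscale (a * b) v.
Proof. by case: (piS v) => c ->; rewrite !scalepi mulrA. Qed.
Lemma qscale1 : left_id 1 qscale.
Proof. by move=> x; case: (piS x) => a ->; rewrite scalepi mul1r. Qed.
Lemma qscaleDr : right_distributive qscale +%R.
Proof.
move=> c x y; case: (piS x) => a ->; case: (piS y) => b ->.
by rewrite !qaddE addpi !scalepi addpi mulrDr.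
Qed.
Lemma qscaleDl v : {morph qscale^~ v: a b / a + b}.
Proof.
move=> a b; case: (piS v) => c ->.
by rewrite qaddE !scalepi addpi mulrDl.
Qed.
HB.instance Definition _ := GRing.Zmodule_isLmodule.Build A Q qscaleA qscale1 qscaleDr qscaleDl.

Lemma qpi0 a : qpi a = 0 <-> p a.
Proof. by rewrite -[0]/(qpi 0) piE subr0. Qed.
Lemma qscale_pi1 a : a *: qpi 1 = qpi a.
Proof. by rewrite -[a *: _]/(qscale a (qpi 1)) scalepi mulr1. Qed.

Lemma quo_fg : fin_gen Q.
Proof.
exists [:: qpi 1] => x; case: (piS x) => a ->; exists (fun _ => a).
by rewrite big_ord1 /= qscale_pi1.
Qed.
End Quot.

Section QuotAss.
Variables (A : comPzRingType) (p : A -> Prop) (hp : is_ideal p).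

Lemma quo_Ass_self : prime_ideal p -> Ass (quo hp hp) p.
Proof.
move=> pp; split=> //; exists (qpi hp 1) => a.
by rewrite qscale_pi1 qpi0.
Qed.

Lemma quo_Ass_eq : prime_ideal p -> forall q, Ass (quo hp hp) q -> forall a, q a <-> p a.
Proof.
move=> [_ p1 pm] q [[_ q1 _] [x hx]] a.
case: (piS x) => b ex; subst x.
have hq : forall c, q c <-> p (c * b).
  by move=> c; rewrite hx -[c *: _]/(qscale c (qpi hp b)) scalepi qpi0.
have nb : ~ p b by move=> pb; apply: q1; apply/hq; rewrite mul1r.
rewrite hq; split; first by move/pm => [].
by move=> pa; apply: idealMr.
Qed.

Lemma quo_Ass_full : (forall a, p a) -> forall q, ~ Ass (quo hp hp) q.
Proof.
move=> hall q [[_ q1 _] [x hx]]; apply: q1; apply/hx.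
case: (piS x) => b ->; rewrite -[1 *: _]/(qscale 1 (qpi hp b)) scalepi qpi0; exact: hall.
Qed.
End QuotAss.

Lemma full_ideal (A : comPzRingType) : is_ideal (fun _ : A => True).
Proof. by []. Qed.

Unset Implicit Arguments.
Theorem corollary2p5 (A : comPzRingType) (hA : noetherian_ring A) :
  (forall D1 D2 : subcat A, sub_ext_closed D1 -> sub_ext_closed D2 ->
     (forall p, AssD D1 p <-> AssD D2 p) ->
     forall M : lmodType A, D1 M <-> D2 M)
  /\
  (forall Phi : (A -> Prop) -> Prop, (forall p, Phi p -> prime_ideal p) ->
     exists D : subcat A, sub_ext_closed D /\ (forall p, AssD D p <-> Phi p)).
Proof.
have dir : forall D1 D2 : subcat A, sub_ext_closed D1 -> sub_ext_closed D2 ->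
    (forall p, AssD D1 p -> AssD D2 p) -> forall M : lmodType A, D1 M -> D2 M.
  move=> D1 D2 h1 h2 h12 M hM.
  have : fin_gen M by case: h1 => _ h _ _; apply: h.
  move=> /fg_span [s hs]; apply: (key hA h2 hs) => q hq.
  by apply: h12; exists M.
split.
  move=> D1 D2 h1 h2 heq M; split; apply: dir => // p; apply heq.
move=> Phi hPhi.
exists (fun N => fin_gen N /\ forall q, Ass N q -> Phi q); split.
  split.
  - exists (quo (full_ideal A) (full_ideal A)); split; first exact: quo_fg.
    by move=> q hq; exfalso; exact: (@quo_Ass_full A _ (full_ideal A) (fun _ => I) q hq).
  - by move=> M [].
  - move=> N M f inj [fgM AM]; split; first exact: (@fg_sub A hA N M f inj fgM).
    by move=> q /(Ass_inj inj) /AM.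
  - move=> L M N f g inj sur ex [fgL AL] [fgN AN]; split; first exact: fg_ext sur ex fgL fgN.
    by move=> q /(Ass_ext inj ex) [/AL|/AN].
move=> p; split; first by move=> [M [[_ AM] hM]]; apply: AM.
move=> Pp; have pp := hPhi p Pp.
have hp : is_ideal p by case: pp.
exists (quo hp hp); split; last exact: quo_Ass_self.
split; first exact: quo_fg.
move=> q hq; have e := quo_Ass_eq pp hq.
have -> : q = p by apply: funext => a; apply: propext.
exact: Pp.
Qed.
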